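(* For any prime $p\ge5$, any integer $\alpha\ge1$ and any integer $n\ge0$, \[ b_{2}\!\left(p^{2\alpha}n+\frac{(24i+p)p^{2\alpha-1}-1}{24}\right)\equiv 0 \pmod 2 \] for each $i=1,2,\ldots,p-1$.
   Context: For a positive integer $\ell$, $b_\ell(n)$ denotes the number of $\ell$-regular partitions of $n$, i.e. partitions of $n$ having no part divisible by $\ell$; equivalently $\sum_{n\ge0}b_\ell(n)q^n=\prod_{k\ge1}\frac{1-q^{\ell k}}{1-q^k}$. *)

(* Defs.v *)
From mathcomp Require Import all_boot.
Set Implicit Arguments. Unset Strict Implicit. Unset Printing Implicit Defensive.

(* A partition of n is encoded by its multiplicity function: m k = number of
   parts equal to k, for k = 0..n (parts are at most n).  There are no parts
   equal to 0, and sum_k k * m k = n (so each m k <= n, hence fits in 'I_n.+1). *)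
Definition is_partition_mult (n : nat) (m : {ffun 'I_n.+1 -> 'I_n.+1}) : bool :=
  (m ord0 == 0 :> nat) && (\sum_(k < n.+1) (k : nat) * m k == n).

Definition is_regular_mult (ell n : nat) (m : {ffun 'I_n.+1 -> 'I_n.+1}) : bool :=
  [forall k : 'I_n.+1, (0 < (k : nat)) && (ell %| k) ==> (m k == 0 :> nat)].

Definition b (ell n : nat) : nat :=
  #|[set m : {ffun 'I_n.+1 -> 'I_n.+1} | is_partition_mult m && is_regular_mult ell m]|.

(* Main.v *)
Require Import Defs.
From mathcomp Require Import all_boot.
From mathcomp Require Import all_algebra.
From mathcomp Require Import ring zify.
Set Implicit Arguments. Unset Strict Implicit. Unset Printing Implicit Defensive.

Module AlgPart.
Import GRing.Theory Num.Theory.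
Local Open Scope ring_scope.

Section Alg.
Variable M : nat.
Definition eqm (A B : {poly int}) := exists q, A - B = q * 'X^M.

Lemma eqm_refl A : eqm A A.
Proof. by exists 0; rewrite subrr mul0r. Qed.
Lemma eqm_sym A B : eqm A B -> eqm B A.
Proof. by case=> q h; exists (-q); rewrite mulNr -h opprB. Qed.
Lemma eqm_trans A B C : eqm A B -> eqm B C -> eqm A C.
Proof.
case=> q1 h1 [q2 h2]; exists (q1 + q2).
by rewrite mulrDl -h1 -h2 addrA subrK.
Qed.
Lemma eqm_add A B C D : eqm A B -> eqm C D -> eqm (A + C) (B + D).
Proof.
case=> q1 h1 [q2 h2]; exists (q1 + q2).
rewrite mulrDl -h1 -h2; ring.
Qed.
Lemma eqm_mul A B C D : eqm A B -> eqm C D -> eqm (A * C) (B * D).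
Proof.
case=> q1 h1 [q2 h2]; exists (q1 * C + B * q2).
have -> : A * C - B * D = (A - B) * C + B * (C - D) by ring.
rewrite h1 h2; ring.
Qed.
Lemma eqm_prod n (F G : nat -> {poly int}) :
  (forall i, (i < n)%N -> eqm (F i) (G i)) ->
  eqm (\prod_(i < n) F i) (\prod_(i < n) G i).
Proof.
elim: n => [|n IH] h; first by rewrite !big_ord0; apply: eqm_refl.
rewrite !big_ord_recr /=; apply: eqm_mul; last exact: h.
by apply: IH => i hi; apply: h; rewrite ltnS ltnW.
Qed.
Lemma eqm_sum n (F G : nat -> {poly int}) :
  (forall i, (i < n)%N -> eqm (F i) (G i)) ->
  eqm (\sum_(i < n) F i) (\sum_(i < n) G i).
Proof.
elim: n => [|n IH] h; first by rewrite !big_ord0; apply: eqm_refl.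
rewrite !big_ord_recr /=; apply: eqm_add; last exact: h.
by apply: IH => i hi; apply: h; rewrite ltnS ltnW.
Qed.
Lemma eqm_coef A B i : eqm A B -> (i < M)%N -> A`_i = B`_i.
Proof.
case=> q h hi; apply/eqP; rewrite -subr_eq0 -coefB h coefMXn hi //.
Qed.
Lemma eqm_X k : (M <= k)%N -> eqm ('X^k) 0.
Proof.
move=> hk; exists ('X^(k - M)); by rewrite subr0 -exprD subnK.
Qed.
Lemma eqm_tail t (h : nat -> {poly int}) :
  (forall k, (M <= k)%N -> eqm (h k) 1) ->
  eqm (\prod_(k < M + t) h k) (\prod_(k < M) h k).
Proof.
move=> hh; elim: t => [|t IH]; first by rewrite addn0; apply: eqm_refl.
rewrite addnS big_ord_recr /= -[X in eqm _ X]mulr1.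
by apply: eqm_mul => //; apply: hh; rewrite leq_addr.
Qed.

Definition G k := \sum_(j < M) 'X^(k * j) : {poly int}.

Lemma Gn_mul n k : (1 - 'X^k) * (\sum_(j < n) 'X^(k * j)) = 1 - 'X^(k * n) :> {poly int}.
Proof.
elim: n => [|n IH]; first by rewrite big_ord0 muln0 expr0 subrr mulr0.
rewrite big_ord_recr /= mulrDr IH mulnS exprD; ring.
Qed.

Lemma G_mul k : (0 < k)%N -> eqm ((1 - 'X^k) * G k) 1.
Proof.
move=> hk; rewrite /G Gn_mul; exists (- 'X^(k * M - M)).
rewrite mulNr -exprD subnK; first ring.
by rewrite leq_pmull.
Qed.

Lemma G_1 k : (M <= k)%N -> eqm (G k) 1.
Proof.
move=> hk; case: (posnP M) => [M0|Mpos].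
  by exists (G k - 1); rewrite M0 expr0 mulr1.
rewrite /G -(prednK Mpos) big_ord_recl /= muln0 expr0.
exists (\sum_(i < M.-1) 'X^(k * bump 0 i - M)).
rewrite addrAC subrr add0r mulr_suml; apply: eq_bigr => i _; rewrite -exprD subnK //.
by apply: leq_trans hk _; rewrite /bump /= leq_pmulr.
Qed.

Lemma split_prod (f : nat -> {poly int}) n :
  \prod_(k < n + n) f k.+1 = \prod_(k < n) f (2 * k.+1)%N * \prod_(k < n) f (2 * k + 1)%N.
Proof.
elim: n => [|n IH]; first by rewrite !big_ord0 mulr1.
rewrite addnS addSn !big_ord_recr /= IH.
have -> : (2 * n.+1 = (n + n).+2)%N by lia.
have -> : (2 * n + 1 = (n + n).+1)%N by lia.
ring.
Qed.

Lemma odd_prod (h : nat -> {poly int}) n :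
  \prod_(k < n + n) (if odd k then h k else 1) = \prod_(k < n) h (2 * k + 1)%N.
Proof.
elim: n => [|n IH]; first by rewrite !big_ord0.
rewrite addnS addSn !big_ord_recr /= IH addnn odd_double /= mulr1.
by rewrite -addnn; congr (_ * h _); lia.
Qed.

Theorem DO : eqm (\prod_(k < M) (1 + 'X^(k.+1))) (\prod_(k < M) G (2 * k + 1)%N).
Proof.
set D := \prod_(k < M) _.
set O := \prod_(k < M) _.
pose Q := \prod_(k < M) (1 - 'X^(k.+1)) : {poly int}.
pose GG := \prod_(k < M) G k.+1.
pose Odd := \prod_(k < M) (1 - 'X^(2 * k + 1)) : {poly int}.
pose P2 := \prod_(k < M) (1 - 'X^(2 * k.+1)) : {poly int}.
have hQG : eqm (Q * GG) 1.
  rewrite /Q /GG -big_split /= /=.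
  apply: (@eqm_trans _ (\prod_(i < M) (1:{poly int}))); last by rewrite big1_eq; apply: eqm_refl.
  by apply: (eqm_prod (G := fun _ => 1) (F := fun k => (1 - 'X^(k.+1)) * G k.+1)) => i _; apply: G_mul.
have hDQ : D * Q = P2.
  rewrite /D /Q /P2 -big_split /=; apply: eq_bigr => i _.
  by rewrite mulnC exprM; ring.
have hQ2 : eqm (P2 * Odd) Q.
  rewrite /P2 /Odd -(split_prod (fun k => 1 - 'X^k)).
  apply: (@eqm_tail M (fun k => 1 - 'X^(k.+1))) => k hk; rewrite -[X in eqm _ X]subr0; apply: eqm_add; first exact: eqm_refl.
  have := eqm_X (leqW hk); case=> q hq; exists (-q); rewrite mulNr -hq; ring.
have hDOdd : eqm (D * Odd) 1.
  apply: (@eqm_trans _ (D * Odd * (Q * GG))).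
    rewrite -[X in eqm X _]mulr1; apply: eqm_mul; first exact: eqm_refl.
    exact: eqm_sym.
  have -> : D * Odd * (Q * GG) = (D * Q) * Odd * GG by ring.
  rewrite hDQ; apply: eqm_trans hQG; apply: eqm_mul => //; exact: eqm_refl.
have hOOdd : eqm (O * Odd) 1.
  rewrite /O /Odd -big_split /= /=.
  apply: (@eqm_trans _ (\prod_(i < M) (1:{poly int}))); last by rewrite big1_eq; apply: eqm_refl.
  apply: (eqm_prod (G := fun _ => 1) (F := fun k => G (2 * k + 1) * (1 - 'X^(2 * k + 1)))) => i _.
  by rewrite mulrC; apply: G_mul; rewrite addn1.
apply: (@eqm_trans _ (D * (O * Odd))).
  rewrite -[X in eqm X _]mulr1; apply: eqm_mul; first exact: eqm_refl.
  exact: eqm_sym.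
have -> : D * (O * Odd) = O * (D * Odd) by ring.
rewrite -[X in eqm _ X]mulr1; apply: eqm_mul => //; exact: eqm_refl.
Qed.
End Alg.


Lemma prod_condX (I : finType) (c : pred I) (e : I -> nat) :
  \prod_(k : I) (if c k then 'X^(e k) else 0 : {poly int}) =
  if [forall k, c k] then 'X^(\sum_k e k) else 0.
Proof.
case: (boolP [forall k, c k]) => [/forallP h|/forallPn [k hk]].
  by rewrite -prodrXr; apply: eq_bigr => k _; rewrite h.
by rewrite (bigD1 k) //= (negbTE hk) mul0r.
Qed.

Lemma coef_sum_cond (I : finType) (c : pred I) (e : I -> nat) n :
  (\sum_(f : I) (if c f then 'X^(e f) else 0 : {poly int}))`_n =
  #|[set f | c f && (e f == n)]|%:R.
Proof.
rewrite coef_sum -sum1dep_card natr_sum [RHS]big_mkcond /=; apply: eq_bigr => f _.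
by case: (c f) => /=; rewrite ?coef0 // coefXn eq_sym; case: (_ == _).
Qed.

Definition Fb M (k j : 'I_M) : {poly int} :=
  if ~~ (((k == 0 :> nat) || ~~ odd k) && (j != 0 :> nat)) then 'X^(k * j) else 0.

Lemma b_coef N : ((b 2 N)%:R : int) =
  (\prod_(k < N.+1) \sum_(j < N.+1) Fb k j)`_N.
Proof.
rewrite bigA_distr_bigA /=.
rewrite (eq_bigr (fun f : {ffun 'I_N.+1 -> 'I_N.+1} =>
   if [forall k : 'I_N.+1, ~~ (((k == 0 :> nat) || ~~ odd k) && (f k != 0 :> nat))]
   then 'X^(\sum_(k : 'I_N.+1) k * f k)%N else 0)); last by move=> f _; rewrite -prod_condX.
rewrite coef_sum_cond /b; congr (_%:R); apply: eq_card => f; rewrite !inE.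
rewrite /is_partition_mult /is_regular_mult.
case: (_ == N); rewrite ?andbF ?andbT //.
apply/andP/forallP => [[h0 /forallP h] k|h].
  case: (posnP k) => [k0|kp].
    have -> : k = ord0 by apply: val_inj.
    by rewrite h0.
  have := h k; rewrite kp /= dvdn2 => /implyP hk.
  by case: (boolP (odd k)) => //= ok; rewrite hk.
split; first by move: (h ord0); rewrite /= negbK.
apply/forallP => k; apply/implyP => /andP [k0 k2].
by have := h k; rewrite -(negbK (odd k)) -dvdn2 k2 orbT /= negbK.
Qed.

Lemma sumFb N (k : 'I_N.+1) : \sum_(j < N.+1) Fb k j = if odd k then G N.+1 k else 1.
Proof.
rewrite /Fb /G; case: (boolP (odd k)) => ok.
  have k0 : (k == 0 :> nat) = false by apply/negP => /eqP e; rewrite e in ok.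
  by apply: eq_bigr => j _; rewrite k0.
rewrite big_ord_recl /= muln0 expr0 orbT andbF /= big1 ?addr0 // => j _.
Qed.

Definition Fd M (k : 'I_M) (c : bool) : {poly int} :=
  if ~~ ((k == 0 :> nat) && c) then 'X^(k * c) else 0.

Definition dcount N := #|[set g : {ffun 'I_N.+1 -> bool} |
   ~~ g ord0 && (\sum_(k < N.+1) k * g k == N)%N]|.

Lemma d_coef N : ((dcount N)%:R : int) = (\prod_(k < N.+1) \sum_(c : bool) Fd k c)`_N.
Proof.
rewrite bigA_distr_bigA /=.
rewrite (eq_bigr (fun f : {ffun 'I_N.+1 -> bool} =>
   if [forall k : 'I_N.+1, ~~ ((k == 0 :> nat) && f k)]
   then 'X^(\sum_(k : 'I_N.+1) k * f k)%N else 0)); last by move=> f _; rewrite -prod_condX.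
rewrite coef_sum_cond /dcount; congr (_%:R); apply: eq_card => f; rewrite !inE.
congr (_ && _); apply/idP/forallP => [h k|h].
  case: (posnP k) => [k0|kp]; last by case: k kp => [[|k'] ?].
  by have -> : k = ord0 by apply: val_inj.
by move: (h ord0).
Qed.

Lemma prod_Fd N : \prod_(k < N.+1) \sum_(c : bool) Fd k c = \prod_(k < N) (1 + 'X^(k.+1)).
Proof.
rewrite big_ord_recl big_bool /Fd /= add0r mul0n expr0 mul1r; apply: eq_bigr => k _.
by rewrite big_bool /= muln1 muln0 expr0 addrC.
Qed.

Lemma b_eq_d N : b 2 N = dcount N.
Proof.
apply/eqP; rewrite -(eqr_nat int) b_coef d_coef prod_Fd; apply/eqP.
rewrite (eq_bigr (fun k : 'I_N.+1 => if odd k then G N.+1 k else 1)); last by move=> k _; rewrite sumFb.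
have h1 : eqm N.+1 (\prod_(k < N.+1) (if odd k then G N.+1 k else 1))
             (\prod_(k < N.+1) G N.+1 (2 * k + 1)%N).
  rewrite -odd_prod; apply: eqm_sym.
  apply: (@eqm_tail _ _ (fun k => if odd k then G N.+1 k else 1)) => k hk.
  by case: (odd k); [apply: G_1|apply: eqm_refl].
have h2 := DO N.+1.
have h3 : eqm N.+1 (\prod_(k < N.+1) (1 + 'X^(k.+1))) (\prod_(k < N) (1 + 'X^(k.+1))).
  rewrite big_ord_recr /= -[X in eqm _ _ X]mulr1; apply: eqm_mul; first exact: eqm_refl.
  rewrite -[X in eqm _ _ X]addr0; apply: eqm_add; first exact: eqm_refl.
  exact: eqm_X.
apply: eqm_coef (ltnSn N).
apply: eqm_trans h1 _; apply: eqm_trans (eqm_sym h2) _; exact: h3.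
Qed.

End AlgPart.
Import AlgPart.


Lemma invol_even (T : finType) (A : {set T}) (f : T -> T) :
  (forall x, x \in A -> f x \in A) -> (forall x, x \in A -> f (f x) = x) ->
  (forall x, x \in A -> f x != x) -> ~~ odd #|A|.
Proof.
have [n] := ubnP #|A|; elim: n A => // n IH A hn hA hinv hne.
case: (set_0Vmem A) => [->|[x xA]]; first by rewrite cards0.
have fxA := hA x xA; have fxx := hne x xA.
pose A' := (A :\ x) :\ f x.
have hc : #|A| = #|A'|.+2.
  rewrite (cardsD1 x A) xA (cardsD1 (f x) (A :\ x)) !inE fxx fxA /=.
  by rewrite add1n.
rewrite hc /= negbK.
have hA' : forall y, y \in A' -> (y \in A) /\ y != x /\ y != f x.
  by move=> y; rewrite !inE => /and3P [a b c].
apply: IH.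
- by move: hn; rewrite hc; lia.
- move=> y /hA' [yA [yx yfx]]; rewrite !inE hA // andbT.
  apply/andP; split.
    by apply/eqP => e; move/eqP: yx; apply; rewrite -(hinv y yA) e hinv.
  by apply/eqP => e; move/eqP: yfx; apply; rewrite -(hinv y yA) e.
- by move=> y /hA' [yA _]; apply: hinv.
- by move=> y /hA' [yA _]; apply: hne.
Qed.

Lemma find_iota_char (a : pred nat) n k :
  k < n -> a k -> (forall d, d < k -> ~~ a d) -> find a (iota 0 n) = k.
Proof.
move=> kn ak hb.
have hs : has a (iota 0 n) by apply/hasP; exists k => //; rewrite mem_iota.
have fn : find a (iota 0 n) < n by rewrite has_find size_iota in hs.
have hf := nth_find 0 hs; rewrite nth_iota // add0n in hf.
case: (ltngtP (find a (iota 0 n)) k) => // h.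
- by move: (hb _ h); rewrite hf.
- by have := before_find 0 h; rewrite nth_iota // add0n ak.
Qed.

Lemma find_iota_in (a : pred nat) n k :
  k < n -> a k -> (find a (iota 0 n) <= k) && a (find a (iota 0 n)).
Proof.
move=> kn ak.
have hs : has a (iota 0 n) by apply/hasP; exists k => //; rewrite mem_iota.
have fn : find a (iota 0 n) < n by rewrite has_find size_iota in hs.
have hf := nth_find 0 hs; rewrite nth_iota // add0n in hf.
rewrite hf andbT; case: (leqP (find a (iota 0 n)) k) => // h.
by have := before_find 0 h; rewrite nth_iota // add0n ak.
Qed.

Lemma find_iota_before (a : pred nat) n d :
  d < find a (iota 0 n) -> ~~ a d.
Proof.
move=> h; have hn : d < n by have := find_size a (iota 0 n); rewrite size_iota; lia.
by have := before_find 0 h; rewrite nth_iota // add0n => ->.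
Qed.

Lemma find_iota_ge (a : pred nat) n k :
  k <= n -> (forall d, d < k -> ~~ a d) -> k <= find a (iota 0 n).
Proof.
move=> kn hb; rewrite leqNgt; apply/negP => h.
have hs : has a (iota 0 n) by rewrite has_find size_iota; lia.
have := nth_find 0 hs; rewrite nth_iota; last by lia.
by rewrite add0n; apply/negP; apply: hb.
Qed.

Lemma sum_interval s m : s <= m.+1 ->
  (\sum_(s <= k < m.+1) k) * 2 = (m + s) * (m.+1 - s).
Proof.
elim: m => [|m IH] hs.
  case: s hs => [|[|]] // _; by rewrite ?big_nat1 ?big_geq.
case: (ltngtP s m.+2) hs => [h|//|->] _.
  rewrite big_nat_recr //= mulnDl IH //.
  have hd : s + (m.+1 - s) = m.+1 by lia.
  move: hd; rewrite [m.+2 - s]subSn; last by lia. move: (m.+1 - s) => d hd; nia.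
by rewrite big_geq // subnn !muln0.
Qed.

Section Franklin.
Variable N : nat.
Local Notation M := N.+1.
Implicit Types g h : {ffun 'I_M -> bool}.

Definition inb g x := (x < M) && g (inord x).
Definition upd g x v := [ffun k : 'I_M => if (k : nat) == x then v else g k].
Definition sm g := \sum_(k < M) k * g k.

Lemma inb_ord g (k : 'I_M) : inb g k = g k.
Proof. by rewrite /inb ltn_ord inord_val. Qed.

Lemma inb_upd g x v y : inb (upd g x v) y = if y == x then (y < M) && v else inb g y.
Proof.
rewrite /inb /upd; case: (ltnP y M) => hy /=; last by case: (_ == _).
by rewrite ffunE inordK.
Qed.

Lemma inb_lt g x : inb g x -> x <= N.
Proof. by case/andP. Qed.

Lemma ffun_inb g h : (forall x, inb g x = inb h x) -> g = h.
Proof. by move=> e; apply/ffunP => k; rewrite -!inb_ord. Qed.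

Lemma sm_upd g x v : x < M -> sm (upd g x v) + x * inb g x = sm g + x * v.
Proof.
move=> hx; pose i0 := Ordinal hx.
rewrite /sm (bigD1 i0) //= (bigD1 i0 (F := fun k : 'I_M => k * g k)) //=.
rewrite /upd ffunE eqxx -[x]/(i0 : nat) inb_ord.
have -> : \sum_(i < M | i != i0) i * [ffun k : 'I_M => if (k:nat) == i0 then v else g k] i
   = \sum_(i < M | i != i0) i * g i.
  by apply: eq_bigr => i hi; rewrite ffunE (negbTE (hi : (i:nat) != i0)).
set a := _ * v; set b := _ * g i0; set S := \sum_(_ < _ | _) _; lia.
Qed.

Lemma sm_ge2 g x y : x != y -> inb g x -> inb g y -> x + y <= sm g.
Proof.
move=> xy hx hy.
have hxM : x < M by case/andP: hx.
have hyM : y < M by case/andP: hy.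
have e1 := sm_upd g false hxM; rewrite hx /= muln0 addn0 in e1.
have e2 := sm_upd (upd g x false) false hyM.
rewrite inb_upd (negbTE (_ : y != x)) ?(eq_sym y) // hy muln0 addn0 in e2.
lia.
Qed.

Lemma sm_pos g : 0 < sm g -> exists x, inb g x.
Proof.
move=> h; case: (pickP (fun k : 'I_M => g k)) => [k gk|none].
  by exists k; rewrite inb_ord.
by move: h; rewrite /sm big1 // => k _; rewrite none muln0.
Qed.

Definition mx g := N - find (fun d => inb g (N - d)) (iota 0 M).
Definition mn g := find (inb g) (iota 0 M).
Definition sg g := find (fun d => ~~ inb g (mx g - d)) (iota 0 M).

Lemma mx_spec g x : inb g x -> (x <= mx g) && inb g (mx g).
Proof.
move=> hx; have xN := inb_lt hx.
have /andP [h1 h2] := @find_iota_in (fun d => inb g (N - d)) M (N - x) (ltac:(lia))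
  (ltac:(by rewrite /= subKn)).
by rewrite /mx h2 andbT; lia.
Qed.

Lemma mn_spec g x : inb g x -> (mn g <= x) && inb g (mn g).
Proof.
move=> hx; have xN := inb_lt hx.
exact: (@find_iota_in (inb g) M x (ltac:(lia)) hx).
Qed.



Lemma sg_spec g x : ~~ inb g 0 -> inb g x ->
  [/\ sg g <= mx g, ~~ inb g (mx g - sg g) & forall d, d < sg g -> inb g (mx g - d)].
Proof.
move=> h0 hx; have /andP [_ hm] := mx_spec hx; have mN := inb_lt hm.
have /andP [h1 h2] := @find_iota_in (fun d => ~~ inb g (mx g - d)) M (mx g) (ltac:(lia))
  (ltac:(by rewrite /= subnn)).
split => //; move=> d hd; apply/negPn; exact: (find_iota_before hd).
Qed.

Lemma sm_interval g s m : s <= m.+1 -> m <= N ->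
  (forall y, inb g y = (s <= y <= m)) -> sm g * 2 = (m + s) * (m.+1 - s).
Proof.
move=> hs hm hy; rewrite -sum_interval //; congr (_ * 2).
rewrite /sm (eq_bigr (fun k : 'I_M => if s <= k <= m then (k : nat) else 0)); last first.
  by move=> k _; rewrite -inb_ord hy; case: (_ && _); rewrite ?muln1 ?muln0.
rewrite -(big_mkord xpredT (fun k => if s <= k <= m then k else 0)).
rewrite (@big_cat_nat _ _ _ s 0 M) //=; try lia.
rewrite (@big_cat_nat _ _ _ m.+1 s M) //=; try lia.
rewrite big1_seq ?add0n; last by move=> i /andP [_]; rewrite mem_iota; case: ifP => //; lia.
rewrite [X in _ + X]big1_seq ?addn0; last by move=> i /andP [_]; rewrite mem_iota; case: ifP => //; lia.
by apply: eq_big_nat => i hi; rewrite ifT //; lia.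
Qed.

Definition phi g :=
  if mn g <= sg g then upd (upd (upd g (mn g) false) (mx g - mn g).+1 false) (mx g).+1 true
  else upd (upd (upd g (mx g) false) (mx g - sg g) true) (sg g) true.

Hypothesis npent : forall x, 24 * N + 1 != x ^ 2.

Lemma caseA g : ~~ inb g 0 -> sm g = N -> mn g <= sg g ->
  [/\ ~~ inb (phi g) 0, sm (phi g) = N, phi g != g & phi (phi g) = g].
Proof.
move=> h0 hsum hle.
have Npos : 0 < N.
  by rewrite lt0n; apply/negP => /eqP N0; move: (npent 1); rewrite N0.
have [x0 hx0] : exists x, inb g x by apply: sm_pos; rewrite hsum.
have /andP [hx0m hm] := mx_spec hx0.
have hmax : forall y, inb g y -> y <= mx g by move=> y /mx_spec /andP [].
have /andP [hx0s hs] := mn_spec hx0.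
have hmin : forall y, inb g y -> mn g <= y by move=> y /mn_spec /andP [].
have [hsm hgap hrun] := sg_spec h0 hx0.
clear hx0m hx0s.
set m := mx g in hm hmax hsm hgap hrun.
set s := mn g in hle hs hmin.
set sig := sg g in hle hsm hgap hrun.
have ephi : phi g = upd (upd (upd g s false) (m - s).+1 false) m.+1 true.
  by rewrite /phi -/s -/m -/sig hle.
rewrite ephi; clearbody m s sig.
have mN := inb_lt hm.
have s0 : 0 < s by rewrite lt0n; apply/negP => /eqP e; move: hs; rewrite e (negbTE h0).
have sm' : s <= m by apply: hmax.
have hst : s < (m - s).+1.
  rewrite ltnNge; apply/negP => hts.
  have hsig : sig <= (m - s).+1.
    rewrite leqNgt; apply/negP => /hrun; have -> : m - (m - s).+1 = s.-1 by lia.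
    by move/hmin; lia.
  have es : s = sig by lia.
  have em : m = (s + s).-1 by lia.
  have hint : forall y, inb g y = (s <= y <= m).
    move=> y; apply/idP/idP => [hy|/andP [h1 h2]]; first by rewrite hmin ?hmax.
    have -> : y = m - (m - y) by lia.
    by apply: hrun; lia.
  have := sm_interval (leq_trans sm' (leqnSn m)) mN hint.
  rewrite hsum => e.
  have h1 : m + s = 3 * s - 1 by lia.
  have h2 : m.+1 - s = s by lia.
  rewrite h1 h2 in e.
  have : 24 * N + 1 = (6 * s - 1) ^ 2.
    have -> : 6 * s - 1 = (6 * s).-1 by lia.
    clear -s0 e; move: s0 e; case: (s) => // s' _ e; rewrite mulnS /=; nia.
  by move/eqP; rewrite (negbTE (npent _)).
set t := (m - s).+1 in hst *.
have et : t + s = m.+1 by rewrite /t; lia.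
clearbody t.
have tm : t <= m by lia.
have ht : inb g t by rewrite (_ : t = m - s.-1); [apply: hrun|]; lia.
have m1N : m.+1 <= N.
  have sneqm : s != m by apply/eqP => e; lia.
  have := sm_ge2 sneqm hs hm; rewrite hsum; lia.
set h := upd _ m.+1 true.
have hh : forall y, inb h y = (y == m.+1) || ((y != t) && (y != s) && inb g y).
  move=> y; rewrite /h !inb_upd.
  case: (y =P m.+1) => [->|ym] /=; first by rewrite ltnS m1N ?andbT.
  case: (y =P t) => [->|yt] /=; first by rewrite andbF.
  by case: (y =P s) => [->|ys] /=; rewrite ?andbF.
have sM : s < M by lia.
have tM : t < M by lia.
have m1M : m.+1 < M by lia.
have ts : (t == s) = false by apply/eqP; lia.
have m1t : (m.+1 == t) = false by apply/eqP; lia.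
have m1s : (m.+1 == s) = false by apply/eqP; lia.
have gm1 : inb g m.+1 = false by apply/negP => /hmax; lia.
have hhs : sm h = N.
  have e1 := sm_upd g false sM; rewrite hs muln0 addn0 in e1.
  have e2 := sm_upd (upd g s false) false tM.
  rewrite inb_upd ts ht muln0 addn0 in e2.
  have e3 := sm_upd (upd (upd g s false) t false) true m1M.
  rewrite !inb_upd m1t m1s gm1 -/h muln0 addn0 muln1 in e3.
  move: e1 e2 e3; lia.
clearbody h.
have hin : inb h m.+1 by rewrite hh eqxx.
have hmh : mx h = m.+1.
  have /andP [a b] := mx_spec hin.
  move: b; rewrite hh => /orP [/eqP //| /andP [_ /hmax]]; lia.
have hsg : sg h = s.
  rewrite /sg hmh; apply: find_iota_char; first by lia.
    by rewrite /= hh negb_or (_ : m.+1 - s = t) ?eqxx ?andbF ?andbT; lia.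
  move=> d hd /=; rewrite negbK hh; case: d hd => [|d] hd; first by rewrite subn0 eqxx.
  apply/orP; right; rewrite hrun; last by lia.
  rewrite andbT; apply/andP; split; apply/eqP; lia.
have hmn : s < mn h.
  have /andP [a b] := mn_spec hin.
  move: b; rewrite hh => /orP [/eqP -> //| /andP [/andP [_ ns] /hmin]].
  by rewrite leq_eqVlt eq_sym (negbTE ns).
have ephi2 : phi h = upd (upd (upd h m.+1 false) t true) s true.
  rewrite /phi hmh hsg ifN; last by rewrite -ltnNge.
  by rewrite (_ : m.+1 - s = t); last lia.
split.
- by rewrite hh (negbTE h0) !andbF.
- exact: hhs.
- apply/negP => /eqP e; have := hin; rewrite e => /hmax; lia.
rewrite ephi2; apply: ffun_inb => y; rewrite !inb_upd.
case: (y =P s) => [->|ys] /=; first by rewrite sM hs.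
case: (y =P t) => [->|yt] /=; first by rewrite tM ht.
case: (y =P m.+1) => [->|ym] /=; first by rewrite gm1 andbF.
rewrite hh; move/eqP/negbTE: ys => ->; move/eqP/negbTE: yt => ->.
by move/eqP/negbTE: ym => ->.
Qed.


Lemma caseB g : ~~ inb g 0 -> sm g = N -> sg g < mn g ->
  [/\ ~~ inb (phi g) 0, sm (phi g) = N, phi g != g & phi (phi g) = g].
Proof.
move=> h0 hsum hle.
have Npos : 0 < N.
  by rewrite lt0n; apply/negP => /eqP N0; move: (npent 1); rewrite N0.
have [x0 hx0] : exists x, inb g x by apply: sm_pos; rewrite hsum.
have /andP [hx0m hm] := mx_spec hx0.
have hmax : forall y, inb g y -> y <= mx g by move=> y /mx_spec /andP [].
have /andP [hx0s hs] := mn_spec hx0.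
have hmin : forall y, inb g y -> mn g <= y by move=> y /mn_spec /andP [].
have [hsm hgap hrun] := sg_spec h0 hx0.
clear hx0m hx0s.
set m := mx g in hm hmax hsm hgap hrun.
set s := mn g in hle hs hmin.
set sig := sg g in hle hsm hgap hrun.
have ephi : phi g = upd (upd (upd g m false) (m - sig) true) sig true.
  by rewrite /phi -/s -/m -/sig ifN // -ltnNge.
rewrite ephi; clearbody m s sig.
have mN := inb_lt hm.
have s0 : 0 < s by rewrite lt0n; apply/negP => /eqP e; move: hs; rewrite e (negbTE h0).
have sm' : s <= m by apply: hmax.
set gp := m - sig in hgap *.
have egp : gp + sig = m by rewrite /gp; lia.
clearbody gp.
have sig0 : 0 < sig.
  by rewrite lt0n; apply/negP => /eqP e; move: hgap hm; rewrite -egp e addn0 => /negbTE ->.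
have hgs : s.-1 <= gp.
  rewrite leqNgt; apply/negP => hlt.
  have hd : m - s.-1 < sig by lia.
  have := hrun _ hd; rewrite (_ : m - (m - s.-1) = s.-1); last by lia.
  by move/hmin; lia.
have gpsig : gp != sig.
  apply/negP => /eqP egs.
  have es : s = sig.+1 by lia.
  have em : m = (s + s).-2 by lia.
  have hint : forall y, inb g y = (s <= y <= m).
    move=> y; apply/idP/idP => [hy|/andP [h1 h2]]; first by rewrite hmin ?hmax.
    have -> : y = m - (m - y) by lia.
    by apply: hrun; lia.
  have := sm_interval (leq_trans sm' (leqnSn m)) mN hint.
  rewrite hsum => e.
  have h1 : m + s = 3 * s - 2 by lia.
  have h2 : m.+1 - s = s - 1 by lia.
  rewrite h1 h2 in e.
  have : 24 * N + 1 = (6 * s - 5) ^ 2.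
    have s2 : 2 <= s by lia.
    clear -s2 e; move: s2 e.
    case: (s) => [|[|s']] // _.
    have -> : 6 * s'.+2 - 5 = 6 * s' + 7 by lia.
    have -> : 3 * s'.+2 - 2 = 3 * s' + 4 by lia.
    have -> : s'.+2 - 1 = s'.+1 by lia.
    move=> e; nia.
  by move/eqP; rewrite (negbTE (npent _)).
have sgp : sig < gp by move: gpsig; lia.
have gpm : gp < m by lia.
have hsigg : inb g sig = false by apply/negP => /hmin; lia.
have mM : m < M by lia.
have gpM : gp < M by lia.
have sigM : sig < M by lia.
have gpm' : (gp == m) = false by apply/eqP; lia.
have sgm : (sig == m) = false by apply/eqP; lia.
have sgg : (sig == gp) = false by apply/eqP; lia.
set h := upd _ sig true.
have hh : forall y, inb h y = (y == sig) || (y == gp) || ((y != m) && inb g y).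
  move=> y; rewrite /h !inb_upd.
  case: (y =P sig) => [->|ys] /=; first by rewrite sigM.
  case: (y =P gp) => [->|yg] /=; first by rewrite gpM.
  by case: (y =P m) => [->|ym] /=; rewrite ?andbF.
have hhs : sm h = N.
  have e1 := sm_upd g false mM; rewrite hm muln0 addn0 in e1.
  have e2 := sm_upd (upd g m false) true gpM.
  rewrite inb_upd gpm' (negbTE hgap) muln0 addn0 muln1 in e2.
  have e3 := sm_upd (upd (upd g m false) gp true) true sigM.
  rewrite !inb_upd sgg sgm hsigg -/h muln0 addn0 muln1 in e3.
  move: e1 e2 e3; lia.
clearbody h.
have hin : inb h sig by rewrite hh eqxx.
have hin2 : inb h m.-1.
  rewrite hh; case: (m.-1 =P gp) => [_|ne]; first by rewrite orbT.
  rewrite orbF; apply/orP; right; apply/andP; split; first by apply/eqP; lia.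
  rewrite (_ : m.-1 = m - 1); last by lia.
  by apply: hrun; move: ne; lia.
have hmh : mx h = m.-1.
  have /andP [a b] := mx_spec hin2.
  move: b; rewrite hh => /orP [/orP [/eqP e|/eqP e]|/andP [/eqP ne /hmax]]; lia.
have hmn : mn h = sig.
  have /andP [a b] := mn_spec hin.
  move: b; rewrite hh => /orP [/orP [/eqP e|/eqP e]|/andP [/eqP ne /hmin]]; lia.
have hsg : sig <= sg h.
  rewrite /sg hmh; apply: find_iota_ge; first by lia.
  move=> d hd /=; rewrite negbK hh.
  case: (d =P sig.-1) => [->|nd].
    by rewrite (_ : m.-1 - sig.-1 = gp) ?eqxx ?orbT //; lia.
  apply/orP; right; apply/andP; split; first by apply/eqP; lia.
  rewrite (_ : m.-1 - d = m - d.+1); last by lia.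
  by apply: hrun; lia.
have ephi2 : phi h = upd (upd (upd h sig false) gp false) m true.
  rewrite /phi hmh hmn ifT; last exact: hsg.
  have -> : (m.-1 - sig).+1 = gp by lia.
  have -> : (m.-1).+1 = m by lia.
  by [].
split.
- rewrite hh (negbTE h0) andbF orbF; apply/negP => /orP [] /eqP; lia.
- exact: hhs.
- apply/negP => /eqP e; have := hm; rewrite -e hh eqxx /= orbF => /orP [] /eqP; lia.
rewrite ephi2; apply: ffun_inb => y; rewrite !inb_upd.
case: (y =P m) => [->|ym] /=; first by rewrite mM hm.
case: (y =P gp) => [->|yg] /=; first by rewrite andbF (negbTE hgap).
case: (y =P sig) => [->|ys] /=; first by rewrite hsigg andbF.
rewrite hh; move/eqP/negbTE: ys => ->; move/eqP/negbTE: yg => ->.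
by move/eqP/negbTE: ym => ->.
Qed.

Lemma franklin :
  ~~ odd #|[set g : {ffun 'I_M -> bool} | ~~ g ord0 && (\sum_(k < M) k * g k == N)%N]|.
Proof.
have key : forall g, ~~ inb g 0 -> sm g = N ->
    [/\ ~~ inb (phi g) 0, sm (phi g) = N, phi g != g & phi (phi g) = g].
  move=> g h0 hs; case: (leqP (mn g) (sg g)) => hl; [exact: caseA | exact: caseB].
have hin : forall g, (g \in [set g : {ffun 'I_M -> bool} | ~~ g ord0 && (\sum_(k < M) k * g k == N)%N])
   = ~~ inb g 0 && (sm g == N).
  by move=> g; rewrite inE -(inb_ord g ord0).
apply: (invol_even (f := phi)) => g; rewrite !hin => /andP [h0 /eqP hs];
  have [a b c d] := key g h0 hs.
- by rewrite a b eqxx.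
- exact: d.
- exact: c.
Qed.
End Franklin.


Lemma sq_mod24 p : prime p -> 5 <= p -> p ^ 2 = 1 %[mod 24].
Proof.
move=> pp p5.
have n2 : ~~ (2 %| p) by apply/negP => /(prime_nt_dvdP pp (isT : 2 != 1)) e; rewrite -e in p5.
have n3 : ~~ (3 %| p) by apply/negP => /(prime_nt_dvdP pp (isT : 3 != 1)) e; rewrite -e in p5.
rewrite -modnXm.
have e := divn_eq p 24.
have h2 : (2 %| p) = (2 %| p %% 24).
  by rewrite {1}e dvdn_addr // dvdn_mull.
have h3 : (3 %| p) = (3 %| p %% 24).
  by rewrite {1}e dvdn_addr // dvdn_mull.
rewrite h2 in n2; rewrite h3 in n3.
have hr : p %% 24 < 24 by rewrite ltn_mod.
move: (p %% 24) hr n2 n3 => r.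
have key : all (fun r => ~~ (2 %| r) && ~~ (3 %| r) ==> (r ^ 2 %% 24 == 1)) (iota 0 24).
  by vm_compute.
move=> hr a b; move/allP: key => /(_ r); rewrite mem_iota /= => /(_ hr) /implyP.
by rewrite a b => /(_ isT) /eqP.
Qed.

Lemma npent_N p a n i : prime p -> 5 <= p -> 1 <= a -> 1 <= i <= p.-1 ->
  forall x, 24 * (p ^ (2 * a) * n + ((24 * i + p) * p ^ (2 * a - 1) - 1) %/ 24) + 1 != x ^ 2.
Proof.
move=> pp p5 a1 /andP [i1 ip] x.
set e := 2 * a - 1.
have ee : 2 * a = e.+1 by rewrite /e; lia.
set K := (24 * i + p) * p ^ e.
have hK : K %% 24 = 1.
  rewrite /K -modnMml [24 * i]mulnC modnMDl modnMml -expnS -ee expnM -modnXm sq_mod24 //.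
  by rewrite modnXm exp1n.
have eK := divn_eq K 24; rewrite hK in eK.
have -> : (K - 1) %/ 24 = K %/ 24 by rewrite {1}eK addnK mulnK.
have e24 : 24 * (p ^ (2 * a) * n + K %/ 24) + 1 = p ^ e * (p * (24 * n + 1) + 24 * i).
  have hK' : 24 * (K %/ 24) + 1 = K by rewrite mulnC -eK.
  rewrite mulnDr -addnA hK' /K ee expnS; ring.
rewrite e24; apply/eqP => hx.
have p0 : 0 < p by exact: prime_gt0.
have ndvd : ~~ (p %| p * (24 * n + 1) + 24 * i).
  rewrite (dvdn_addr _ (dvdn_mulr _ (dvdnn p))) Euclid_dvdM // negb_or; apply/andP; split.
    rewrite (_ : 24 = 2 * (2 * (2 * 3))) // !Euclid_dvdM //.
    by apply/negP => /orP [/dvdn_leq|/orP [/dvdn_leq|/orP [/dvdn_leq|/dvdn_leq]]] => /(_ isT); lia.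
  by apply/negP => /(dvdn_leq i1); lia.
have := congr1 (logn p) hx.
rewrite lognX lognM ?expn_gt0 ?p0 // ?pfactorK //; last lia.
rewrite logn_coprime ?prime_coprime //; lia.
Qed.

Theorem theorem3p2 (p alpha n i : nat) :
  prime p -> 5 <= p -> 1 <= alpha -> 1 <= i <= p.-1 ->
  b 2 (p ^ (2 * alpha) * n + ((24 * i + p) * p ^ (2 * alpha - 1) - 1) %/ 24)
    = 0 %[mod 2].
Proof.
move=> pp p5 a1 hi.
have hn := npent_N n pp p5 a1 hi.
rewrite b_eq_d /dcount modn2.
by move/negbTE: (franklin hn) => ->.
Qed.
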